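(* Fix a cell with energy $E>0$ carried by an initial finite population of particles with positive weights summing to $E$, a source energy $S>0$, and a positive integer $N_{obj}$, and suppose that $\frac{S N_{obj}}{E+S}\in\mathbb{N}$ and that $N^{vol}>1$, where $w_{obj}=(E+S)/N_{obj}$ and $N^{vol}=\max(1,\lfloor S/w_{obj}\rfloor)$. Consider the following iterative procedure on two populations: the $N^{vol}$ volumic (emitted) particles each have weight $S/N^{vol}$ and are never modified; at each iteration $l$, the current non-volumic population of $N^{ini}_l$ particles undergoes Russian Roulette and non-conservative Splitting with target weight $w_{obj}$ (as described in the context, with fresh independent uniform random variables), after which the non-volumic particles are rescaled by a common factor so that the total mass of all particles (volumic and non-volumic) equals $E+S$ (if no non-volumic particle survives, they are replaced by a single particle of weight $E$). Let $N^l=N^{vol}+N^{ini}_l$ be the number of particles at iteration $l$. Then $\lim_{l\to\infty}\mathbb{P}[N^l=N_{obj}]=1$; more precisely, there exists $\lambda>0$ such that $\mathbb{P}(N^l\neq N_{obj})\le e^{-l\lambda}$.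
   Context: Russian Roulette and non-conservative Splitting with target weight $w_{obj}>0$ applied to a population of particles with positive weights: for each particle $p$ of weight $w_p$ draw independently $u_p\sim\mathcal U(0,1)$, set $I_p=\lfloor w_p/w_{obj}\rfloor$, $R_p=w_p/w_{obj}-I_p$. If $I_p=0$, the particle is killed if $R_p<u_p$ and otherwise its weight becomes $w_{obj}$. If $I_p\ge1$, with $N^{split}_p=I_p+\mathbf 1_{\{u_p<R_p\}}$, the particle is replaced by $N^{split}_p$ copies each of weight $w_{obj}$. *)

(* Defs.v *)
From HB Require Import structures.
From mathcomp Require Import all_boot all_order all_algebra.
From mathcomp Require Import all_classical all_reals all_analysis.

Set Implicit Arguments.
Unset Strict Implicit.
Unset Printing Implicit Defensive.

Import Order.TTheory GRing.Theory Num.Theory.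
Local Open Scope classical_set_scope.
Local Open Scope ring_scope.

Definition wobj (R : realType) (E S : R) (Nobj : nat) : R := (E + S) / Nobj%:R.

(* N^vol = max(1, floor(S / w_obj)); S / w_obj >= 0 so truncn = floor. *)
Definition Nvol (R : realType) (E S : R) (Nobj : nat) : nat :=
  maxn 1 (Num.truncn (S / wobj E S Nobj)).

(* Number of copies (each of weight w_obj) produced from a particle of
   weight w with uniform draw u by Russian Roulette / non-conservative
   Splitting (I_p = 0: killed iff R_p < u, else one particle of weight w_obj;
   I_p >= 1: I_p + 1_{u < R_p} copies). *)
Definition rr_copies (R : realType) (w_obj w u : R) : nat :=
  let I := Num.truncn (w / w_obj) in
  let Rp := w / w_obj - I%:R in
  if I == 0%N then (if Rp < u then 0%N else 1%N) else addn I (u < Rp)%R.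

Definition rr_split (R : realType) (w_obj : R) (ws : seq R) (u : nat -> R)
  : seq R :=
  flatten [seq nseq (rr_copies w_obj (nth 0 ws p) (u p)) w_obj
          | p <- iota 0 (size ws)].

Definition renormalize (R : realType) (E S : R) (nvol : nat) (ws : seq R)
  : seq R :=
  if ws is [::] then [:: E] else
  let c := (E + S - \sum_(v <- nseq nvol (S / nvol%:R)) v)
           / \sum_(w <- ws) w in
  [seq c * w | w <- ws].

Definition step (R : realType) (E S : R) (Nobj : nat) (ws : seq R)
  (u : nat -> R) : seq R :=
  renormalize E S (Nvol E S Nobj) (rr_split (wobj E S Nobj) ws u).

Fixpoint pop (R : realType) (E S : R) (Nobj : nat) (ws0 : seq R)
  (u : nat -> nat -> R) (l : nat) : seq R :=
  match l with
  | 0%N => ws0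
  | l'.+1 => step E S Nobj (pop E S Nobj ws0 u l') (u l')
  end.

Definition Ntot (R : realType) (T : Type) (E S : R) (Nobj : nat)
  (ws0 : seq R) (U : nat -> nat -> T -> R) (l : nat) (om : T) : nat :=
  (Nvol E S Nobj + size (pop E S Nobj ws0 (fun k p => U k p om) l))%N.

Definition uniform01 (R : realType) (d : measure_display) (T : measurableType d)
  (P : probability T R) (X : T -> R) : Prop :=
  forall B : set R, measurable B ->
    P (X @^-1` B) = lebesgue_measure (B `&` [set x : R | 0 < x < 1]).

Definition mutually_independent (R : realType) (d : measure_display)
  (T : measurableType d) (P : probability T R) (I : eqType)
  (X : I -> T -> R) : Prop :=
  forall (s : seq I) (B : I -> set R), uniq s ->
    (forall i, i \in s -> measurable (B i)) ->
    P (\bigcap_(i in [set i | i \in s]) (X i @^-1` B i)) =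
    \big[*%E/1%E]_(i <- s) P (X i @^-1` B i).

(* Main.v *)
Require Import Defs.
From HB Require Import structures.
From mathcomp Require Import all_boot all_order all_algebra.
From mathcomp Require Import all_classical all_reals all_analysis.
From mathcomp Require Import ring lra zify.
Import Order.TTheory GRing.Theory Num.Theory.
Local Open Scope classical_set_scope.
Local Open Scope ring_scope.
Section Det.
Variables (R : realType) (E S : R) (Nobj k : nat).
Hypothesis E0 : 0 < E.
Hypothesis S0 : 0 < S.
Hypothesis N0 : (0 < Nobj)%N.
Hypothesis hk : S * Nobj%:R / (E + S) = k%:R.
Hypothesis hNv : (1 < Nvol E S Nobj)%N.

Local Notation wo := (wobj E S Nobj).

Lemma wo_gt0 : 0 < wo.
Proof. by rewrite /wobj divr_gt0 ?addr_gt0 // ltr0n. Qed.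

Lemma S_wo : S / wo = k%:R.
Proof.
rewrite -hk /wobj; have h1 : E + S != 0 by rewrite gt_eqF ?addr_gt0.
have h2 : Nobj%:R != 0 :> R by rewrite pnatr_eq0 -lt0n.
by field; rewrite h1 h2.
Qed.

Lemma Nvol_k : Nvol E S Nobj = k.
Proof.
move: hNv; rewrite /Nvol S_wo natrK => h.
by apply/maxn_idPr; move: h; rewrite leq_max ltnn /= => /ltnW.
Qed.

Lemma k_gt1 : (1 < k)%N.
Proof. by rewrite -Nvol_k. Qed.

Definition mm := (Nobj - k)%N.

Lemma E_wo : E / wo = mm%:R.
Proof.
have h1 : E + S != 0 by rewrite gt_eqF ?addr_gt0.
have h2 : Nobj%:R != 0 :> R by rewrite pnatr_eq0 -lt0n.
have e : E / wo = Nobj%:R - k%:R.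
  by rewrite -S_wo /wobj; field; rewrite h1 h2.
have hp : 0 < E / wo by rewrite divr_gt0 // wo_gt0.
have kl : (k < Nobj)%N by rewrite -(ltr_nat R) -subr_gt0 -e.
by rewrite e /mm natrB // ltnW.
Qed.

Lemma mm_gt0 : (0 < mm)%N.
Proof.
have hp : 0 < E / wo by rewrite divr_gt0 // wo_gt0.
by rewrite -(ltr_nat R) -E_wo.
Qed.

Definition Rp (r : R) := r - (Num.truncn r)%:R.
Definition cb (r u : R) : bool :=
  if Num.truncn r == 0%N then ~~ (Rp r < u) else u < Rp r.

Lemma copiesE w u : rr_copies wo w u = (Num.truncn (w / wo) + cb (w / wo) u)%N.
Proof.
rewrite /rr_copies /cb /Rp /=.
by case: eqP => [->|//]; case: ifP.
Qed.

Lemma Rp_ge0 r : 0 <= r -> 0 <= Rp r.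
Proof. by move=> h; rewrite /Rp subr_ge0 truncn_le. Qed.

Lemma Rp_lt1 r : 0 <= r -> Rp r < 1.
Proof.
move=> h; rewrite /Rp ltrBlDl; have := truncnS_gt r.
by rewrite -natr1 addrC.
Qed.

Lemma flatten_nseq (x : R) (s : seq nat) (f : nat -> nat) :
  flatten [seq nseq (f p) x | p <- s] = nseq (\sum_(p <- s) f p)%N x.
Proof. by elim: s => [|a s IH] /=; rewrite ?big_nil ?big_cons // IH nseqD. Qed.

Definition Msz (ws : seq R) (u : nat -> R) : nat :=
  (\sum_(p <- iota 0 (size ws)) rr_copies wo (nth 0%R ws p) (u p))%N.

Lemma rr_splitE ws u : rr_split wo ws u = nseq (Msz ws u) wo.
Proof.
by rewrite /rr_split /Msz flatten_nseq.
Qed.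

Definition uni (n : nat) := nseq n (E / n%:R).

Lemma sum_nseq n (x : R) : \sum_(v <- nseq n x) v = x *+ n.
Proof. by rewrite big_nseq; elim: n => //= n ->; rewrite mulrS. Qed.

Lemma renorm_nseq M : renormalize E S k (nseq M wo) = uni (maxn 1 M).
Proof.
case: M => [|M]; first by rewrite /uni /= divr1.
rewrite /uni (maxn_idPr _) // /renormalize /= -/(nseq M.+1 wo) map_nseq.
rewrite sum_nseq (_ : \sum_(w <- wo :: nseq M wo) w = wo *+ M.+1); last first.
  by rewrite -sum_nseq.
have -> : (E + S - S / k%:R *+ k) / (wo *+ M.+1) * wo = E / M.+1%:R; last by [].
rewrite -[S / k%:R *+ k]mulr_natr -[wo *+ M.+1]mulr_natr.
have k0 : k%:R != 0 :> R by rewrite pnatr_eq0 -lt0n ltnW // k_gt1.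
have w0 : wo != 0 by rewrite gt_eqF // wo_gt0.
have M0 : M.+1%:R != 0 :> R by rewrite pnatr_eq0.
field; rewrite ?k0 ?w0 //= andbT; move: M0; by rewrite -natr1 addrC.
Qed.

Lemma pop_succ ws0 (u : nat -> nat -> R) l :
  pop E S Nobj ws0 u l.+1 = uni (maxn 1 (Msz (pop E S Nobj ws0 u l) (u l))).
Proof. by rewrite /= /step Nvol_k rr_splitE renorm_nseq. Qed.


Lemma ratio_uni n : (E / n%:R) / wo = mm%:R / n%:R.
Proof. by rewrite mulrAC E_wo. Qed.

Lemma copies_le1 w u : (rr_copies wo w u <= Num.truncn (w / wo) + 1)%N.
Proof. by rewrite copiesE leq_add2l leq_b1. Qed.

Lemma Msz_uni n u :
  Msz (uni n) u = (\sum_(p <- iota 0 n) rr_copies wo (E / n%:R) (u p))%N.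
Proof.
rewrite /Msz /uni size_nseq; apply: eq_big_seq => p.
by rewrite mem_iota add0n => /andP[_ h]; rewrite nth_nseq h.
Qed.

Lemma sum_const_seq (I : Type) (s : seq I) (c : R) :
  \sum_(i <- s) c = c *+ size s.
Proof. by elim: s => [|a s IH]; rewrite ?big_nil ?big_cons ?IH ?mulrS. Qed.

Lemma Msz_le ws u : all (fun w => 0 <= w) ws -> \sum_(w <- ws) w = E ->
  (Msz ws u <= mm + size ws)%N.
Proof.
move=> hp hs.
apply: (leq_trans (leq_sum _ (fun p _ => copies_le1 (nth 0 ws p) (u p)))).
rewrite big_split /= sum1_size size_iota leq_add2r.
have e : mm%:R = (\sum_(w <- ws) w) / wo by rewrite hs E_wo.
rewrite -(ler_nat R) natr_sum e [X in _ <= X / _](big_nth 0) /index_iota subn0 mulr_suml.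
apply: ler_sum => p _; rewrite truncn_le.
have hw : 0 <= nth 0 ws p.
  case: (ltnP p (size ws)) => h; last by rewrite nth_default.
  by move/allP: hp; apply; rewrite mem_nth.
by rewrite divr_ge0 // ltW // wo_gt0.
Qed.

Lemma uni_sum n : (0 < n)%N -> \sum_(w <- uni n) w = E.
Proof.
by move=> n0; rewrite sum_nseq -[_ *+ n]mulr_natr divfK // pnatr_eq0 -lt0n.
Qed.

Lemma uni_ge0 n : all (fun w => 0 <= w) (uni n).
Proof.
apply/allP => x; rewrite /uni => /nseqP[-> _].
by rewrite divr_ge0 // ltW.
Qed.

Lemma uni_gt n u : (mm < n)%N -> (Msz (uni n) u <= n)%N.
Proof.
move=> hn; rewrite Msz_uni.
apply: (@leq_trans (\sum_(p <- iota 0 n) 1)%N); last by rewrite sum1_size size_iota.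
apply: leq_sum => p _; apply: (leq_trans (copies_le1 _ _)).
have n0 : 0 < n%:R :> R by rewrite ltr0n (leq_ltn_trans _ hn).
rewrite ratio_uni; suff -> : Num.truncn (mm%:R / n%:R : R) = 0%N by [].
apply/eqP; rewrite -leqn0 -ltnS truncn_lt_nat ?divr_ge0 //.
by rewrite ltr_pdivrMr // mul1r ltr_nat.
Qed.

Lemma uni_le n u : (n <= mm)%N -> (0 < n)%N -> (Msz (uni n) u <= mm.*2)%N.
Proof.
move=> hn n0; apply: (leq_trans (Msz_le (uni n) u (uni_ge0 n) (uni_sum n n0))).
by rewrite size_nseq -addnn leq_add2l.
Qed.

Lemma pop_inv ws0 (u : nat -> nat -> R) l :
  all (fun w => 0 < w) ws0 -> \sum_(w <- ws0) w = E ->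
  exists n, [/\ (0 < n)%N, (n <= mm.*2 + size ws0)%N &
                pop E S Nobj ws0 u l.+1 = uni n].
Proof.
move=> hp hs.
have hp' : all (fun w => 0 <= w) ws0.
  by apply/allP => x /(allP hp) /ltW.
have K1 : (1 <= mm.*2 + size ws0)%N.
  by rewrite (leq_trans mm_gt0) // -addnn -addnA leq_addr.
elim: l => [|l [n [n0 nK IH]]]; rewrite pop_succ ?IH.
  exists (maxn 1 (Msz ws0 (u 0%N))); split => //; first by rewrite leq_max.
  rewrite geq_max K1 /=; apply: (leq_trans (Msz_le ws0 (u 0%N) hp' hs)).
  by rewrite leq_add2r -addnn leq_addr.
exists (maxn 1 (Msz (uni n) (u l.+1))); split => //; first by rewrite leq_max.
rewrite geq_max K1 /=; case: (ltnP mm n) => h.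
  exact: (leq_trans (uni_gt n (u l.+1) h)).
by apply: (leq_trans (uni_le n (u l.+1) h n0)); rewrite leq_addr.
Qed.

Lemma copies_one u : 0 <= u -> rr_copies wo (E / mm%:R) u = 1%N.
Proof.
move=> hu; have m0 : mm%:R != 0 :> R by rewrite pnatr_eq0 -lt0n mm_gt0.
rewrite copiesE ratio_uni divff // truncn1 /cb /Rp truncn1 subrr /=.
by rewrite ltNge hu.
Qed.

Lemma absorb u : (forall p, (p < mm)%N -> 0 <= u p) -> Msz (uni mm) u = mm.
Proof.
move=> hu; rewrite Msz_uni (eq_big_seq (fun => 1%N)) ?sum1_size ?size_iota //.
by move=> p; rewrite mem_iota add0n => /andP[_ h]; rewrite copies_one // hu.
Qed.

Lemma trunc_small n : (mm < n)%N -> Num.truncn (mm%:R / n%:R : R) = 0%N.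
Proof.
move=> hn; have n0 : 0 < n%:R :> R by rewrite ltr0n (leq_ltn_trans _ hn).
apply/eqP; rewrite -leqn0 -ltnS truncn_lt_nat ?divr_ge0 //.
by rewrite ltr_pdivrMr // mul1r ltr_nat.
Qed.

Lemma G_ge n u K : (mm <= n)%N -> (n <= K)%N ->
  (forall p, (p < mm)%N -> 0 < u p < K%:R^-1) ->
  (forall p, (mm <= p)%N -> (p < K)%N -> 1 - K%:R^-1 < u p) ->
  Msz (uni n) u = mm.
Proof.
move=> hmn hnK hlo hhi.
have n0 : (0 < n)%N := leq_trans mm_gt0 hmn.
have nR : 0 < n%:R :> R by rewrite ltr0n.
have KR : 0 < K%:R :> R by rewrite ltr0n (leq_trans n0).
have Kn : K%:R^-1 <= n%:R^-1 :> R by rewrite lef_pV2 ?posrE // ler_nat.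
have key : forall p, (p < n)%N ->
    rr_copies wo (E / n%:R) (u p) = (p < mm)%N.
  move=> p hp; case: (eqVneq n mm) => [en|nen].
    rewrite en in hp *; rewrite hp copies_one //.
    exact: ltW (andP (hlo p hp)).1.
  have hlt : (mm < n)%N by rewrite ltn_neqAle eq_sym nen hmn.
  rewrite copiesE ratio_uni /cb /Rp trunc_small // eqxx subr0 add0n.
  have h1 : n%:R^-1 <= mm%:R / n%:R :> R.
    by rewrite -[X in X <= _]mul1r ler_wpM2r ?invr_ge0 ?ler0n // ler1n mm_gt0.
  have h2 : mm%:R / n%:R <= 1 - n%:R^-1 :> R.
    rewrite ler_pdivrMr // mulrBl mul1r mulVf ?gt_eqF //.
    by move: hlt; rewrite -(ler_nat R) -natr1 => h; lra.
  case: (ltnP p mm) => hpm.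
    have [_ h3] := andP (hlo p hpm).
    by rewrite -leNgt (le_trans (ltW h3)) // (le_trans Kn).
  have h3 := hhi p hpm (leq_trans hp hnK).
  suff -> : mm%:R / n%:R < u p by [].
  by apply: (le_lt_trans h2); apply: le_lt_trans h3; rewrite lerB // lef_pV2 ?posrE // ler_nat.
rewrite Msz_uni (eq_big_seq (fun p => nat_of_bool (p < mm)%N)); last first.
  by move=> p; rewrite mem_iota add0n => /andP[_ hp]; rewrite key.
rewrite -(subnKC hmn) iotaD big_cat /= add0n.
rewrite (eq_big_seq (fun => 1%N)) ?sum1_size ?size_iota; last first.
  by move=> p; rewrite mem_iota add0n => /andP[_ ->].
rewrite big1_seq ?addn0 // => p; rewrite mem_iota => /andP[_ /andP[h _]].
by rewrite ltnNge h.
Qed.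

Lemma G_lt n u K : (0 < n)%N -> (n < mm)%N -> (n <= K)%N ->
  (forall p, (p < n)%N -> 0 < u p < K%:R^-1) -> (mm <= Msz (uni n) u)%N.
Proof.
move=> n0 hnm hnK hlo.
have nR : 0 < n%:R :> R by rewrite ltr0n.
have KR : 0 < K%:R :> R by rewrite ltr0n (leq_trans n0).
have Kn : K%:R^-1 <= n%:R^-1 :> R by rewrite lef_pV2 ?posrE // ler_nat.
have key : forall p, (p < n)%N ->
    mm%:R / n%:R <= (rr_copies wo (E / n%:R) (u p))%:R :> R.
  move=> p hp; have /andP[u0 uK] := hlo p hp.
  rewrite copiesE ratio_uni; set r := mm%:R / n%:R.
  have r1 : 1 <= r by rewrite /r ler_pdivlMr // mul1r ler_nat ltnW.
  have r0 : 0 <= r by apply: le_trans r1.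
  have I0 : Num.truncn r != 0%N by rewrite -lt0n truncn_gt0.
  rewrite /cb (negbTE I0).
  have [Rz|Rnz] := eqVneq (Rp r) 0.
    have hI : r = (Num.truncn r)%:R by move: Rz; rewrite /Rp => /eqP; rewrite subr_eq0 => /eqP.
    by rewrite natrD -hI lerDl ler0n.
  have Rpos : 0 < Rp r by rewrite lt0r Rnz Rp_ge0.
  have e : n%:R * Rp r = mm%:R - (n * Num.truncn r)%:R.
    rewrite /Rp /r natrM mulrBr mulrA mulrC mulrA mulVf ?gt_eqF // mul1r.
    by rewrite mulrC.
  have hlt : (n * Num.truncn r < mm)%N.
    by rewrite -(ltr_nat R) -subr_gt0 -e mulr_gt0.
  have e1 : 1 <= n%:R * Rp r.
    by rewrite e; move: hlt; rewrite -(ler_nat R) -natr1 => h; lra.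
  have e2 : n%:R^-1 <= Rp r.
    by rewrite -div1r ler_pdivrMr // mulrC.
  have -> : u p < Rp r by apply: (lt_le_trans uK); apply: le_trans e2.
  by rewrite addn1 ltW // truncnS_gt.
rewrite -(ler_nat R) Msz_uni natr_sum.
have -> : mm%:R = \sum_(p <- iota 0 n) (mm%:R / n%:R) :> R.
  by rewrite sum_const_seq size_iota -[_ *+ n]mulr_natr divfK // gt_eqF.
rewrite big_seq [X in _ <= X]big_seq; apply: ler_sum => p.
by rewrite mem_iota add0n => /andP[_ hp]; exact: key.
Qed.

Lemma mask_exists (a : seq bool) J : (J <= count id a)%N ->
  exists c : seq bool, [/\ size c = size a,
    (forall i, nth false c i -> nth false a i) & count id c = J].
Proof.
elim: a J => [|b a IH] J /=.
  by rewrite leqn0 => /eqP ->; exists [::]; split => // -[|i].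
case: b => /= hJ.
  case: J hJ => [|J] hJ.
    exists (nseq (size a).+1 false); split.
    - by rewrite size_nseq.
    - by move=> i; rewrite nth_nseq; case: ifP.
    - by rewrite count_nseq mul0n.
  have [c [h1 h2 h3]] := IH J hJ.
  exists (true :: c); split => /=; first by rewrite h1.
    by case=> [|i] //=; apply: h2.
  by rewrite h3.
have [c [h1 h2 h3]] := IH J hJ.
exists (false :: c); split => /=; first by rewrite h1.
  by case=> [|i] //=; apply: h2.
by rewrite h3.
Qed.

Lemma count_sumE (I : Type) (s : seq I) (P : pred I) :
  count P s = (\sum_(x <- s) (P x : nat))%N.
Proof. by elim: s => [|a s IH]; rewrite ?big_nil ?big_cons //= IH. Qed.

Lemma sum_nth_count (c : seq bool) :
  (\sum_(i <- iota 0 (size c)) (nth false c i : nat))%N = count id c.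
Proof. by rewrite count_sumE (big_nth false) /index_iota subn0. Qed.

Lemma nth_ratio_ge0 ws i : all (fun w => 0 < w) ws -> 0 <= nth 0%R ws i / wo.
Proof.
move=> hp; have hw : 0 <= nth 0%R ws i.
  case: (ltnP i (size ws)) => h; last by rewrite nth_default.
  by apply: ltW; move/allP: hp; apply; rewrite mem_nth.
by rewrite divr_ge0 // ltW // wo_gt0.
Qed.

Lemma H_exists ws : all (fun w => 0 < w) ws -> \sum_(w <- ws) w = E ->
  exists c : seq bool, [/\ size c = size ws,
     (forall i, nth false c i -> 0 < Rp (nth 0%R ws i / wo)) &
     (\sum_(i <- iota 0 (size ws)) Num.truncn (nth 0%R ws i / wo) + count id c
       = mm)%N].
Proof.
move=> hp hs.
have sr : \sum_(i <- iota 0 (size ws)) (nth 0%R ws i / wo) = mm%:R.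
  have e : mm%:R = (\sum_(w <- ws) w) / wo by rewrite hs E_wo.
  by rewrite e [X in _ = X / _](big_nth 0) /index_iota subn0 mulr_suml.
set T := (\sum_(i <- iota 0 (size ws)) Num.truncn (nth 0%R ws i / wo))%N.
have Tle : (T <= mm)%N.
  rewrite -(ler_nat R) natr_sum -sr; apply: ler_sum => i _.
  by rewrite truncn_le nth_ratio_ge0.
set a := [seq 0 < Rp (nth 0%R ws i / wo) | i <- iota 0 (size ws)].
have Ja : (mm - T <= count id a)%N.
  rewrite -(ler_nat R) natrB // natr_sum -sr -sumrB /a count_map count_sumE.
  rewrite natr_sum; apply: ler_sum => i _.
  have h0 := nth_ratio_ge0 ws i hp.
  rewrite -/(Rp (nth 0%R ws i / wo)).
  have h2 := Rp_lt1 _ h0.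
  case h: (0 < Rp (nth 0%R ws i / wo)) => /=.
    rewrite h; by apply: ltW; apply: (lt_le_trans h2); rewrite ler1n.
  by rewrite h leNgt h.
have [c [h1 h2 h3]] := mask_exists a (mm - T) Ja.
exists c; split; first by rewrite h1 /a size_map size_iota.
  move=> i /h2; rewrite /a; case: (ltnP i (size ws)) => hi.
    by rewrite (nth_map 0%N) ?size_iota // nth_iota.
  by rewrite nth_default // size_map size_iota.
by rewrite h3 subnKC.
Qed.

Lemma H_step ws c u : size c = size ws ->
  (\sum_(i <- iota 0 (size ws)) Num.truncn (nth 0%R ws i / wo) + count id c
       = mm)%N ->
  (forall i, (i < size ws)%N -> if nth false c i
      then u i < Rp (nth 0%R ws i / wo) else Rp (nth 0%R ws i / wo) < u i) ->
  Msz ws u = mm.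
Proof.
move=> hsz hsum hu; rewrite -hsum /Msz.
rewrite (eq_big_seq (fun i => Num.truncn (nth 0%R ws i / wo) + nth false c i)%N);
  last first.
  move=> i; rewrite mem_iota add0n => /andP[_ hi]; rewrite copiesE; congr addn.
  have := hu i hi; rewrite /cb; case: (nth false c i) => h.
    by case: eqP => _ /=; [rewrite -leNgt ltW | rewrite h].
  by case: eqP => _ /=; [rewrite h | rewrite ltNge ltW].
by rewrite big_split /= -hsz sum_nth_count.
Qed.

End Det.
Section Prob.
Variables (R : realType) (d : measure_display) (T : measurableType d).
Variables (P : probability T R) (U : nat -> nat -> T -> R).
Hypothesis hmeas : forall l p, measurable_fun setT (U l p).
Hypothesis hunif : forall l p, uniform01 P (U l p).
Hypothesis hind : mutually_independent P (fun lp : nat * nat => U lp.1 lp.2).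

Definition pr (A : set T) : R := fine (P A).

Lemma prE A : measurable A -> P A = (pr A)%:E.
Proof. by move=> hA; rewrite /pr fineK // fin_num_measure. Qed.

Lemma pr_ge0 A : 0 <= pr A.
Proof. by rewrite /pr fine_ge0. Qed.

Lemma pr_le1 A : measurable A -> pr A <= 1.
Proof. by move=> hA; rewrite -lee_fin -prE // probability_le1. Qed.

Lemma meas_pre j p (A : set R) : measurable A -> measurable (U j p @^-1` A).
Proof. by move=> hA; have := @hmeas j p measurableT A hA; rewrite setTI. Qed.

Lemma pr_itv j p (a b : R) : 0 <= a -> a < b -> b <= 1 ->
  pr (U j p @^-1` `]a, b[%classic) = b - a.
Proof.
move=> a0 ab b1; rewrite /pr hunif; last exact: measurable_itv.
have -> : `]a, b[%classic `&` [set x : R | 0 < x < 1] = `]a, b[%classic.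
  apply/seteqP; split => x /=; first by case.
  rewrite in_itv /= => /andP[h1 h2]; split; first by rewrite h1 h2.
  by rewrite (le_lt_trans a0 h1) (lt_le_trans h2 b1).
by rewrite lebesgue_measure_itv /= lte_fin ab.
Qed.

Lemma P_neg j p : P [set om | U j p om < 0] = 0%E.
Proof.
have -> : [set om | U j p om < 0] = U j p @^-1` `]-oo, 0[%classic.
  by apply/seteqP; split => om /=; rewrite in_itv.
rewrite hunif; last exact: measurable_itv.
have -> : `]-oo, 0[%classic `&` [set x : R | 0 < x < 1] = set0.
  apply/seteqP; split => x //= []; rewrite in_itv /= => h /andP[h1 _].
  by move: (lt_trans h1 h); rewrite ltxx.
exact: measure0.
Qed.

Section Boxes.
Variable B : nat * nat -> set R.
Hypothesis hB : forall i, measurable (B i).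

Definition box (s : seq (nat * nat)) : set T :=
  [set om | forall i, i \in s -> B i (U i.1 i.2 om)].

Lemma box_cons i s : box (i :: s) = U i.1 i.2 @^-1` B i `&` box s.
Proof.
apply/seteqP; split => om /=.
  by move=> h; split; [apply: h; rewrite mem_head | move=> j js; apply: h; rewrite in_cons js orbT].
by move=> [h1 h2] j; rewrite in_cons => /orP[/eqP ->|]; [|apply: h2].
Qed.

Lemma box_nil : box [::] = setT.
Proof. by apply/seteqP; split => om. Qed.

Lemma box_cat s t : box (s ++ t) = box s `&` box t.
Proof.
apply/seteqP; split => om /=.
  by move=> h; split => i hi; apply: h; rewrite mem_cat hi ?orbT.
by move=> [h1 h2] i; rewrite mem_cat => /orP[/h1|/h2].
Qed.

Lemma box_meas s : measurable (box s).
Proof.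
elim: s => [|i s IH]; first by rewrite box_nil.
by rewrite box_cons; apply: measurableI => //; apply: meas_pre.
Qed.

Lemma pr_box s : uniq s -> pr (box s) = \prod_(i <- s) pr (U i.1 i.2 @^-1` B i).
Proof.
move=> us; apply: EFin_inj; rewrite -prE; last exact: box_meas.
have -> : box s = \bigcap_(i in [set i | i \in s]) ((fun lp : nat * nat => U lp.1 lp.2) i @^-1` B i).
  by apply/seteqP; split => om /=.
rewrite hind //.
rewrite -prodEFin; apply: eq_bigr => i _.
by rewrite prE //; apply: meas_pre.
Qed.

Definition cbox (ts : seq (seq (nat * nat))) : set T :=
  [set om | forall t, t \in ts -> ~ box t om].

Lemma cbox_cons t ts : cbox (t :: ts) = ~` box t `&` cbox ts.
Proof.
apply/seteqP; split => om /=.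
  by move=> h; split; [apply: h; rewrite mem_head | move=> j js; apply: h; rewrite in_cons js orbT].
by move=> [h1 h2] j; rewrite in_cons => /orP[/eqP ->|]; [|apply: h2].
Qed.

Lemma cbox_meas ts : measurable (cbox ts).
Proof.
elim: ts => [|t ts IH].
  by have -> : cbox [::] = setT by apply/seteqP; split => om.
by rewrite cbox_cons; apply: measurableI => //; apply: measurableC; apply: box_meas.
Qed.

Lemma pr_cbox ts s0 : uniq (s0 ++ flatten ts) ->
  pr (box s0 `&` cbox ts) = pr (box s0) * \prod_(t <- ts) (1 - pr (box t)).
Proof.
elim: ts s0 => [|t ts IH] s0 hu.
  have -> : cbox [::] = setT by apply/seteqP; split => om.
  by rewrite setIT big_nil mulr1.
rewrite cbox_cons /= in hu *.
have hu1 : uniq (s0 ++ flatten ts).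
  by move: hu; rewrite uniq_catCA cat_uniq => /and3P[_ _].
have hu2 : uniq ((s0 ++ t) ++ flatten ts) by rewrite -catA.
have hu3 : uniq (s0 ++ t) by move: hu2; rewrite cat_uniq => /and3P[].
have hus0 : uniq s0 by move: hu3; rewrite cat_uniq => /and3P[].
have hut : uniq t by move: hu3; rewrite cat_uniq => /and3P[].
have e1 : box s0 `&` (~` box t `&` cbox ts) = (box s0 `&` cbox ts) `\` box t.
  by apply/seteqP; split => om /=; tauto.
have e2 : (box s0 `&` cbox ts) `&` box t = box (s0 ++ t) `&` cbox ts.
  by rewrite box_cat; apply/seteqP; split => om /=; tauto.
have hm0 : measurable (box s0 `&` cbox ts) by apply: measurableI; [apply: box_meas|apply: cbox_meas].
have e3 : pr (box s0 `&` (~` box t `&` cbox ts)) =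
    pr (box s0 `&` cbox ts) - pr (box (s0 ++ t) `&` cbox ts).
  apply: EFin_inj; rewrite e1 -prE; last by apply: measurableD => //; apply: box_meas.
  have hm1 : measurable (box (s0 ++ t) `&` cbox ts).
    by apply: measurableI; [apply: box_meas|apply: cbox_meas].
  rewrite measureD //; first by rewrite e2 EFinB /pr fineK ?fin_num_measure // fineK ?fin_num_measure.
  - exact: box_meas.
  - by apply: (le_lt_trans (probability_le1 P hm0)); exact: ltry.
rewrite e3 IH // IH // big_cons.
have -> : pr (box (s0 ++ t)) = pr (box s0) * pr (box t).
  by rewrite !pr_box // big_cat.
ring.
Qed.

End Boxes.

End Prob.
Section Meas.
Variables (R : realType) (d : measure_display) (T : measurableType d).
Variables (U : nat -> nat -> T -> R).
Hypothesis hmeas : forall l p, measurable_fun setT (U l p).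
Variables (E S : R) (Nobj : nat).
Local Notation wo := (wobj E S Nobj).

Lemma meas_const (Q : Prop) : measurable [set _ : T | Q].
Proof.
case: (pselect Q) => h.
  by have -> : [set _ : T | Q] = setT by apply/seteqP; split.
by have -> : [set _ : T | Q] = set0 by apply/seteqP; split.
Qed.

Lemma meas_exists (I : eqType) (s : seq I) (F : I -> set T) :
  (forall i, measurable (F i)) ->
  measurable [set om | exists2 i, i \in s & F i om].
Proof.
move=> hF; elim: s => [|a s IH].
  by have -> : [set om | exists2 i, i \in [::] & F i om] = set0
    by apply/seteqP; split => om //= [].
have -> : [set om | exists2 i, i \in a :: s & F i om] =
    F a `|` [set om | exists2 i, i \in s & F i om].
  apply/seteqP; split => om /=.
    move=> [i]; rewrite in_cons => /orP[/eqP ->|hi hF']; first by left.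
    by right; exists i.
  by move=> [h|[i hi h]]; [exists a; rewrite ?mem_head | exists i; rewrite // in_cons hi orbT].
exact: measurableU.
Qed.

Lemma meas_cbU j p r : measurable [set om | cb R r (U j p om)].
Proof.
have hU : forall A : set R, measurable A -> measurable (U j p @^-1` A).
  by move=> A hA; have := @hmeas j p measurableT A hA; rewrite setTI.
rewrite /cb; case: eqP => _.
  have -> : [set om | ~~ (Rp R r < U j p om)] = U j p @^-1` `]-oo, Rp R r]%classic.
    by apply/seteqP; split => om /=; rewrite in_itv /= leNgt.
  by apply: hU; apply: measurable_itv.
have -> : [set om | U j p om < Rp R r] = U j p @^-1` `]-oo, Rp R r[%classic.
  by apply/seteqP; split => om /=; rewrite in_itv.
by apply: hU; apply: measurable_itv.
Qed.

Lemma meas_count (b : nat -> T -> bool) (s : seq nat) :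
  (forall p, measurable [set om | b p om]) ->
  forall c M, measurable [set om | (c + \sum_(p <- s) (b p om : nat))%N = M].
Proof.
move=> hb; elim: s => [|a s IH] c M.
  have -> : [set om | (c + \sum_(p <- [::]) (b p om : nat))%N = M] = [set _ | c = M].
    by apply/seteqP; split => om /=; rewrite big_nil addn0.
  exact: meas_const.
have -> : [set om | (c + \sum_(p <- a :: s) (b p om : nat))%N = M] =
   ([set om | b a om] `&` [set om | (c.+1 + \sum_(p <- s) (b p om : nat))%N = M])
   `|` (~` [set om | b a om] `&` [set om | (c + \sum_(p <- s) (b p om : nat))%N = M]).
  apply/seteqP; split => om /=; rewrite big_cons; case: (b a om) => /=.
  - by move=> h; left; split => //; rewrite -h; lia.
  - by move=> h; right; split => //; rewrite -h; lia.
  - by case=> [[_ h]|[]//]; rewrite -h; lia.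
  - by case=> [[]//|[_ h]]; rewrite -h; lia.
by apply: measurableU; apply: measurableI; try exact: IH; try exact: hb;
  apply: measurableC; exact: hb.
Qed.

Lemma meas_Msz ws j M :
  measurable [set om | Msz R E S Nobj ws (fun p => U j p om) = M].
Proof.
have -> : [set om | Msz R E S Nobj ws (fun p => U j p om) = M] =
  [set om | ((\sum_(p <- iota 0 (size ws)) Num.truncn (nth 0%R ws p / wo)) +
     \sum_(p <- iota 0 (size ws)) (cb R (nth 0%R ws p / wo) (U j p om) : nat))%N = M].
  apply/seteqP; split => om /=; rewrite /Msz;
    by rewrite (eq_bigr _ (fun p _ => copiesE R E S Nobj _ _)) big_split.
apply: meas_count => p; exact: meas_cbU.
Qed.

Definition bd (v : seq R) : nat :=
  (\sum_(p <- iota 0 (size v)) (Num.truncn (nth 0%R v p / wo) + 1))%N.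

Lemma Msz_bd v u : (Msz R E S Nobj v u <= bd v)%N.
Proof. by apply: leq_sum => p _; apply: copies_le1. Qed.

Lemma pop_meas ws0 l :
  (exists V : seq (seq R), forall om, pop E S Nobj ws0 (fun k p => U k p om) l \in V)
  /\ (forall ws, measurable [set om | pop E S Nobj ws0 (fun k p => U k p om) l = ws]).
Proof.
elim: l => [|l [[V hV] hm]].
  split; first by exists [:: ws0] => om; rewrite mem_seq1.
  by move=> ws; exact: (meas_const (ws0 = ws)).
set G := fun M => renormalize E S (Nvol E S Nobj) (nseq M wo).
have popS : forall om, pop E S Nobj ws0 (fun k p => U k p om) l.+1 =
    G (Msz R E S Nobj (pop E S Nobj ws0 (fun k p => U k p om) l) (fun p => U l p om)).
  by move=> om; rewrite /= /step rr_splitE.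
split.
  exists (flatten [seq [seq G M | M <- iota 0 (bd v).+1] | v <- V]) => om.
  rewrite popS; apply/flatten_mapP; exists (pop E S Nobj ws0 (fun k p => U k p om) l) => //.
  by apply: map_f; rewrite mem_iota add0n ltnS Msz_bd.
move=> ws.
pose F := fun (v : seq R) (M : nat) =>
  [set om | pop E S Nobj ws0 (fun k p => U k p om) l = v] `&`
  ([set om | Msz R E S Nobj v (fun p => U l p om) = M] `&` [set _ : T | G M = ws]).
have -> : [set om | pop E S Nobj ws0 (fun k p => U k p om) l.+1 = ws] =
  [set om | exists2 v, v \in V &
     [set om1 | exists2 M, M \in iota 0 (bd v).+1 & F v M om1] om].
  apply/seteqP; split => om /=.
    move=> h; exists (pop E S Nobj ws0 (fun k p => U k p om) l) => //.
    have hi : Msz R E S Nobj (pop E S Nobj ws0 (fun k p => U k p om) l) (fun p => U l p om)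
       \in iota 0 (bd (pop E S Nobj ws0 (fun k p => U k p om) l)).+1.
      by rewrite mem_iota add0n ltnS Msz_bd.
    exists (Msz R E S Nobj (pop E S Nobj ws0 (fun k p => U k p om) l) (fun p => U l p om)).
      exact: hi.
    by split => //; split => //; rewrite -popS.
  move=> [v _ [M _ [h1 [h2 h3]]]].
  by move: (popS om) => /= ->; rewrite h1 h2.
apply: meas_exists => v; apply: meas_exists => M.
apply: measurableI; first exact: hm.
apply: measurableI; [exact: meas_Msz | exact: meas_const].
Qed.

Lemma Ntot_meas ws0 l c :
  measurable [set om | Ntot E S Nobj ws0 U l om <> c].
Proof.
have [[V hV] hm] := pop_meas ws0 l.
have -> : [set om | Ntot E S Nobj ws0 U l om <> c] =
  [set om | exists2 v, v \in V & ([set om | pop E S Nobj ws0 (fun k p => U k p om) l = v]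
      `&` [set _ | (Nvol E S Nobj + size v)%N <> c]) om].
  apply/seteqP; split => om /=.
    by move=> h; exists (pop E S Nobj ws0 (fun k p => U k p om) l).
  by move=> [v _ [h1 h2]]; rewrite /Ntot h1.
apply: meas_exists => v; apply: measurableI; [exact: hm | exact: meas_const].
Qed.

End Meas.
Section Main.
Variables (R : realType) (d : measure_display) (T : measurableType d).
Variables (P : probability T R) (U : nat -> nat -> T -> R).
Variables (E S : R) (Nobj k : nat) (ws0 : seq R).
Hypothesis E0 : 0 < E.
Hypothesis S0 : 0 < S.
Hypothesis N0 : (0 < Nobj)%N.
Hypothesis hp : all (fun w => 0 < w) ws0.
Hypothesis hs : \sum_(w <- ws0) w = E.
Hypothesis hk : S * Nobj%:R / (E + S) = k%:R.
Hypothesis hNv : (1 < Nvol E S Nobj)%N.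
Hypothesis hmeas : forall l p, measurable_fun setT (U l p).
Hypothesis hunif : forall l p, uniform01 P (U l p).
Hypothesis hind : mutually_independent P (fun lp : nat * nat => U lp.1 lp.2).

Local Notation wo := (wobj E S Nobj).
Local Notation m := (mm Nobj k).
Local Notation n0 := (size ws0).
Local Notation K := (m.*2 + n0)%N.
Local Notation popo om := (pop E S Nobj ws0 (fun j p => U j p om)).

Lemma m_pos : (0 < m)%N.
Proof. exact: mm_gt0 R E S Nobj k E0 S0 N0 hk. Qed.

Lemma K_ge2 : (2 <= K)%N.
Proof. have := m_pos; lia. Qed.

Lemma m_le_K : (m <= K)%N.
Proof. lia. Qed.

Lemma Nobj_km : Nobj = (k + m)%N.
Proof. have := m_pos; rewrite /mm; lia. Qed.

Lemma Ntot_size l om : (Ntot E S Nobj ws0 U l om = Nobj) <-> (size (popo om l) = m).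
Proof.
rewrite /Ntot (Nvol_k R E S Nobj k E0 S0 N0 hk hNv) {2}Nobj_km.
by split => [/eqP|->//]; rewrite eqn_add2l => /eqP.
Qed.

Lemma popS om l : popo om l.+1 = uni R E (maxn 1 (Msz R E S Nobj (popo om l) (fun p => U l p om))).
Proof. exact: (pop_succ R E S Nobj k E0 S0 N0 hk hNv). Qed.

Lemma absorb_from om j l : popo om j = uni R E m ->
  (forall j', (j <= j')%N -> (j' < l)%N -> forall p, (p < m)%N -> 0 <= U j' p om) ->
  (j <= l)%N -> popo om l = uni R E m.
Proof.
move=> hj; elim: l => [|l IH] hu; first by rewrite leqn0 => /eqP <-.
rewrite leq_eqVlt => /orP[/eqP <-//|hjl].
have hl : popo om l = uni R E m.
  apply: IH; last by rewrite -ltnS.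
  by move=> j' h1 h2; apply: hu => //; apply: leqW.
rewrite popS hl (absorb R E S Nobj k E0 S0 N0 hk); first by rewrite (maxn_idPr m_pos).
by move=> p hpm; apply: hu => //; rewrite -ltnS.
Qed.

Variable c : seq bool.
Hypothesis hc1 : size c = n0.
Hypothesis hc2 : forall i, nth false c i -> 0 < Rp R (nth 0%R ws0 i / wo).
Hypothesis hc3 : (\sum_(i <- iota 0 n0) Num.truncn (nth 0%R ws0 i / wo) + count id c = m)%N.

Definition rr i := Rp R (nth 0%R ws0 i / wo).
Definition BH i : set R := if nth false c i then `]0, rr i[%classic else `]rr i, 1[%classic.
Definition BG p : set R :=
  if (p < m)%N then `]0, K%:R^-1[%classic else `]1 - K%:R^-1, 1[%classic.
Definition Bx (jp : nat * nat) : set R := if jp.1 == 0%N then BH jp.2 else BG jp.2.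
Definition sH : seq (nat * nat) := [seq (0%N, i) | i <- iota 0 n0].
Definition sG (j : nat) : seq (nat * nat) := [seq (j, p) | p <- iota 0 K].
Definition pairs (i : nat) : seq (nat * nat) := sG i.*2.+1 ++ sG i.*2.+2.
Definition ts (f : nat) : seq (seq (nat * nat)) := [seq pairs i | i <- iota 0 f].

Lemma Bx_meas i : measurable (Bx i).
Proof. by rewrite /Bx /BH /BG; case: ifP => _; case: ifP => _; apply: measurable_itv. Qed.

Lemma H_hit om : box R d T U Bx sH om -> popo om 1 = uni R E m.
Proof.
move=> hb; rewrite popS /=.
rewrite (H_step R E S Nobj k ws0 c (fun p => U 0%N p om) hc1 hc3).
  by rewrite (maxn_idPr m_pos).
move=> i hi; have := hb (0%N, i) (map_f _ _); rewrite mem_iota add0n hi => /(_ isT).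
rewrite /Bx /= /BH -/(rr i); case: (nth false c i) => /=; rewrite in_itv /=.
  by case/andP.
by case/andP.
Qed.

Lemma G_cond om j : (0 < j)%N -> box R d T U Bx (sG j) om ->
  (forall p, (p < m)%N -> 0 < U j p om < K%:R^-1) /\
  (forall p, (m <= p)%N -> (p < K)%N -> 1 - K%:R^-1 < U j p om).
Proof.
move=> j0 hb.
have h : forall p, (p < K)%N -> BG p (U j p om).
  move=> p hpK; have := hb (j, p) (map_f _ _); rewrite mem_iota add0n hpK => /(_ isT).
  by rewrite /Bx /= eqn0Ngt j0.
split.
  move=> p hpm; have := h p (leq_trans hpm m_le_K); rewrite /BG hpm /= in_itv /=.
  by [].
move=> p hmp hpK; have := h p hpK; rewrite /BG ltnNge hmp /= in_itv /=.
by case/andP.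
Qed.

Lemma pair_hit om i : box R d T U Bx (pairs i) om -> popo om i.*2.+3 = uni R E m.
Proof.
rewrite /pairs box_cat => -[hb1 hb2].
have [g1 g2] := G_cond om i.*2.+1 isT hb1.
have [g3 g4] := G_cond om i.*2.+2 isT hb2.
have [n [n0' nK hn]] := pop_inv R E S Nobj k E0 S0 N0 hk hNv ws0 (fun j p => U j p om) i.*2 hp hs.
have [n' [_ nK' hn']] := pop_inv R E S Nobj k E0 S0 N0 hk hNv ws0 (fun j p => U j p om) i.*2.+1 hp hs.
set M1 := Msz R E S Nobj (uni R E n) (fun p => U i.*2.+1 p om).
have hM1 : (m <= M1)%N.
  case: (leqP m n) => hmn.
    by rewrite /M1 (G_ge R E S Nobj k E0 S0 N0 hk n _ K hmn nK g1 g2).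
  apply: (G_lt R E S Nobj k E0 S0 N0 hk n _ K n0' hmn nK).
  by move=> p hpn; apply: g1; apply: ltn_trans hmn.
have e1 : popo om i.*2.+2 = uni R E (maxn 1 M1) by rewrite popS hn.
have en : maxn 1 M1 = n'.
  by have := congr1 size (etrans (esym e1) hn'); rewrite /uni !size_nseq.
have hm1 : (m <= maxn 1 M1)%N by rewrite (leq_trans hM1) // leq_maxr.
rewrite popS e1 (G_ge R E S Nobj k E0 S0 N0 hk (maxn 1 M1) _ K hm1) ?en //.
  by rewrite (maxn_idPr m_pos).
Qed.

Local Notation bx s := (box R d T U Bx s).
Local Notation prP := (pr R d T P).

Lemma rr_ge0 i : 0 <= rr i.
Proof. by apply: Rp_ge0; apply: (nth_ratio_ge0 R E S Nobj E0 S0 N0 ws0 i hp). Qed.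

Lemma rr_lt1 i : rr i < 1.
Proof. by apply: Rp_lt1; apply: (nth_ratio_ge0 R E S Nobj E0 S0 N0 ws0 i hp). Qed.

Lemma uniq_sH : uniq sH.
Proof. by rewrite map_inj_uniq ?iota_uniq // => x y []. Qed.

Lemma uniq_sG j : uniq (sG j).
Proof. by rewrite map_inj_uniq ?iota_uniq // => x y []. Qed.

Lemma prod_const_seq (I : Type) (s : seq I) (x : R) : \prod_(i <- s) x = x ^+ size s.
Proof. by elim: s => [|a s IH]; rewrite ?big_nil ?big_cons ?IH ?exprS. Qed.

Lemma Kinv : 0 < K%:R^-1 :> R /\ K%:R^-1 <= 2^-1 :> R.
Proof.
have K2 := K_ge2.
have K0 : 0 < K%:R :> R by rewrite ltr0n (leq_trans _ K2).
split; first by rewrite invr_gt0.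
by rewrite lef_pV2 ?posrE // ?ler_nat // ltr0n.
Qed.

Definition q0 : R := K%:R^-1 ^+ K.

Lemma prod_sG j : (0 < j)%N ->
  \prod_(i <- sG j) prP (U i.1 i.2 @^-1` Bx i) = q0.
Proof.
move=> j0; have [k0 k2] := Kinv.
rewrite big_map (eq_big_seq (fun => K%:R^-1)) ?prod_const_seq ?size_iota //.
move=> p _; rewrite /Bx /= eqn0Ngt j0 /= /BG; case: ifP => _.
  by rewrite (pr_itv R d T P U hunif) ?subr0 //; lra.
by rewrite (pr_itv R d T P U hunif); [lra|lra|lra|lra].
Qed.

Lemma q0_bounds : 0 < q0 < 1.
Proof.
have [k0 k2] := Kinv; have K2 := K_ge2.
rewrite /q0 exprn_gt0 //= exprn_ilt1 ?ltW //; last by lra.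
by rewrite -lt0n (leq_trans _ K2).
Qed.

Lemma pr_pairs i : prP (bx (pairs i)) = q0 * q0.
Proof.
rewrite (pr_box R d T P U hmeas hind Bx Bx_meas); last first.
  rewrite cat_uniq !uniq_sG andbT /=; apply/hasPn => x /mapP[p _ ->].
  by apply/mapP => -[p' _ [] h _]; lia.
by rewrite big_cat /= !prod_sG.
Qed.

Definition pH : R := \prod_(i <- iota 0 n0) (if nth false c i then rr i else 1 - rr i).

Lemma pr_sH : prP (bx sH) = pH.
Proof.
rewrite (pr_box R d T P U hmeas hind Bx Bx_meas sH uniq_sH) big_map /pH.
apply: eq_big_seq => i _; rewrite /Bx /= /BH.
have h0 := rr_ge0 i; have h1 := rr_lt1 i.
case h: (nth false c i).
  by rewrite (pr_itv R d T P U hunif) ?subr0 //; [exact: hc2 | exact: ltW].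
by rewrite (pr_itv R d T P U hunif).
Qed.

Lemma pH_gt0 : 0 < pH.
Proof.
rewrite /pH big_seq; apply: prodr_gt0 => i _.
case h: (nth false c i); first exact: hc2.
by rewrite subr_gt0 rr_lt1.
Qed.

Lemma flat_ts a f : flatten [seq pairs i | i <- iota a f] =
  [seq (j, p) | j <- iota a.*2.+1 f.*2, p <- iota 0 K].
Proof.
elim: f a => [|f IH] a //=.
by rewrite IH /pairs /sG -catA doubleS.
Qed.

Lemma uniq_all f : uniq ([::] ++ flatten (sH :: ts f)).
Proof.
rewrite /= /ts flat_ts cat_uniq uniq_sH /=.
rewrite allpairs_uniq ?iota_uniq ?andbT; last by move=> [x y] [x' y'] _ _ /= [-> ->].
apply/hasPn => x /allpairsP[[j p] [hj _ ->]] /=.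
apply/mapP => -[i _ [ej _]]; move: hj; rewrite ej mem_iota.
by move=> /andP[];rewrite /= ltnn.
all: by [].
Qed.

Definition Negs l : set T := [set om | exists2 jp, jp \in [seq (j, p) | j <- iota 0 l, p <- iota 0 K] &
   [set om' | U jp.1 jp.2 om' < 0] om].

Lemma null_exists (I : eqType) (s : seq I) (F : I -> set T) :
  (forall i, measurable (F i)) -> (forall i, P (F i) = 0%E) ->
  P [set om | exists2 i, i \in s & F i om] = 0%E.
Proof.
move=> hF hP; elim: s => [|a s IH].
  by have -> : [set om | exists2 i, i \in [::] & F i om] = set0
    by apply/seteqP; split => om //= [].
have -> : [set om | exists2 i, i \in a :: s & F i om] =
    F a `|` [set om | exists2 i, i \in s & F i om].
  apply/seteqP; split => om /=.
    move=> [i]; rewrite in_cons => /orP[/eqP ->|hi hF']; first by left.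
    by right; exists i.
  by move=> [h|[i hi h]]; [exists a; rewrite ?mem_head | exists i; rewrite // in_cons hi orbT].
apply/eqP; rewrite eq_le measure_ge0 andbT.
apply: (le_trans (measureU2 P (hF a) (meas_exists _ _ _ s F hF))).
rewrite [X in (X + _ <= _)%E](_ : _ = 0%E); last exact: hP a.
rewrite [X in (_ + X <= _)%E](_ : _ = 0%E); last exact: IH.
by rewrite adde0.
Qed.

Lemma meas_lt0 j p : measurable [set om | U j p om < 0].
Proof.
have -> : [set om | U j p om < 0] = U j p @^-1` `]-oo, 0[%classic.
  by apply/seteqP; split => om /=; rewrite in_itv.
by apply: (meas_pre R d T U hmeas); apply: measurable_itv.
Qed.

Lemma Negs_null l : P (Negs l) = 0%E.
Proof.
apply: null_exists => jp; first exact: meas_lt0.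
exact: (P_neg R d T P U hunif).
Qed.

Lemma Negs_meas l : measurable (Negs l).
Proof. by apply: meas_exists => jp; exact: meas_lt0. Qed.

Lemma incl l : (0 < l)%N ->
  [set om | Ntot E S Nobj ws0 U l om <> Nobj] `<=`
  Negs l `|` (bx [::] `&` cbox R d T U Bx (sH :: ts (l.-1)./2)).
Proof.
move=> l0 om /= hN.
case: (pselect (Negs l om)) => hneg; [by left | right].
have hpos : forall j p, (j < l)%N -> (p < K)%N -> 0 <= U j p om.
  move=> j p hj hpK; rewrite leNgt; apply/negP => hlt; apply: hneg.
  exists (j, p) => //; apply: allpairs_f; rewrite mem_iota add0n //.
have key : forall j, (j <= l)%N -> popo om j = uni R E m -> False.
  move=> j hj e; apply: hN; apply/Ntot_size.
  rewrite (absorb_from om j l e) ?size_nseq //.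
  move=> j' _ hj' p hpm; apply: hpos => //; exact: leq_trans hpm m_le_K.
split; first by move=> i.
move=> t; rewrite in_cons => /orP[/eqP -> hb|].
  exact: (key 1%N l0 (H_hit om hb)).
move=> /mapP[i hi ->] hb; apply: (key i.*2.+3 _ (pair_hit om i hb)).
move: hi; rewrite mem_iota add0n => hi.
have := odd_double_half l.-1; move: hi; case: (odd l.-1) => /=; lia.
Qed.

Lemma bound l : (0 < l)%N ->
  (P [set om | Ntot E S Nobj ws0 U l om <> Nobj] <=
   ((1 - pH) * (1 - q0 * q0) ^+ (l.-1)./2)%:E)%E.
Proof.
move=> l0.
have hB : measurable (bx [::] `&` cbox R d T U Bx (sH :: ts (l.-1)./2)).
  by apply: measurableI; [apply: (box_meas R d T U hmeas Bx Bx_meas) | apply: (cbox_meas R d T U hmeas Bx Bx_meas)].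
have hA : [set om | Ntot E S Nobj ws0 U l om <> Nobj] \in measurable.
  by rewrite inE; apply: (Ntot_meas R d T U hmeas).
have hU : (Negs l `|` (bx [::] `&` cbox R d T U Bx (sH :: ts (l.-1)./2))) \in measurable.
  by rewrite inE; apply: measurableU => //; exact: Negs_meas.
apply: (le_trans (le_measure P hA hU (incl l l0))).
have h : (P (Negs l `|` (bx [::] `&` cbox R d T U Bx (sH :: ts (l.-1)./2)))
   <= P (Negs l) + P (bx [::] `&` cbox R d T U Bx (sH :: ts (l.-1)./2)))%E.
  exact: (measureU2 P (Negs_meas l) hB).
rewrite Negs_null add0e (prE R d T P _ hB) in h.
apply: (le_trans h); rewrite lee_fin.
rewrite (pr_cbox R d T P U hmeas hind Bx Bx_meas (sH :: ts (l.-1)./2) [::] (uniq_all _)).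
rewrite (pr_box R d T P U hmeas hind Bx Bx_meas [::]) // big_nil mul1r big_cons pr_sH.
rewrite /ts big_map (eq_bigr (fun => 1 - q0 * q0)); last by move=> i _; rewrite pr_pairs.
by rewrite prod_const_seq size_iota.
Qed.

Lemma pH_le1 : pH <= 1.
Proof.
rewrite -pr_sH; apply: (pr_le1 R d T P).
exact: (box_meas R d T U hmeas Bx Bx_meas).
Qed.

End Main.
Import numFieldNormedType.Exports.
Lemma half_bound l : (l.+1 <= ((l.+1).-1./2).+1.*2)%N.
Proof.
rewrite /= -[X in (X < _)%N](odd_double_half l); move: (odd l) (l./2) => b h.
by case: b; rewrite -!muln2 /=; lia.
Qed.

Lemma real_bound (R : realType) (a b : R) (f l : nat) : 0 <= a < 1 -> 0 < b < 1 ->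
  (l <= (f.+1).*2)%N ->
  a * b ^+ f <= expR (- (l%:R * (- ln (Num.max a b) / 2))).
Proof.
move=> /andP[a0 a1] /andP[b0 b1] hl.
set th := Num.max a b.
have th0 : 0 < th by rewrite lt_max b0 orbT.
have th1 : th < 1 by rewrite gt_max a1 b1.
have hat : a <= th by rewrite le_max lexx.
have hbt : b <= th by rewrite le_max lexx orbT.
have step1 : a * b ^+ f <= th * th ^+ f.
  have hb' : b \in Num.nneg by rewrite nnegrE ltW.
  have ht' : th \in Num.nneg by rewrite nnegrE ltW.
  apply: ler_pM => //; first by rewrite exprn_ge0 // ltW.
  exact: (lerXn2r f hb' ht' hbt).
apply: (le_trans step1); rewrite -exprS.
have eth : expR (ln th) = th by rewrite lnK // posrE.
have e2 : th ^+ f.+1 = expR (f.+1%:R * ln th) by rewrite expRM_natl eth.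
rewrite e2 ler_expR.
have L0 : ln th < 0 by rewrite ln_lt0 // th0 th1.
have hl' : l%:R <= 2 * f.+1%:R :> R.
  by move: hl; rewrite -(ler_nat R) -muln2 natrM mulrC.
have h : 0 <= (2 * f.+1%:R - l%:R) * (- ln th) :> R.
  by apply: mulr_ge0; lra.
nra.
Qed.

Theorem proposition3 (R : realType) (d : measure_display) (T : measurableType d)
  (P : probability T R) (U : nat -> nat -> T -> R)
  (E S : R) (Nobj : nat) (ws0 : seq R) :
  0 < E -> 0 < S -> (0 < Nobj)%N ->
  all (fun w => 0 < w) ws0 -> \sum_(w <- ws0) w = E ->
  (exists k : nat, S * Nobj%:R / (E + S) = k%:R) ->
  (1 < Nvol E S Nobj)%N ->
  (forall l p, measurable_fun setT (U l p)) ->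
  (forall l p, uniform01 P (U l p)) ->
  mutually_independent P (fun lp : nat * nat => U lp.1 lp.2) ->
  (fun l => P [set om | Ntot E S Nobj ws0 U l om = Nobj]) @ \oo --> 1%E /\
  exists lam : R, 0 < lam /\
    forall l : nat,
      (P [set om | Ntot E S Nobj ws0 U l om <> Nobj]
        <= (expR (- (l%:R * lam)))%:E)%E.
Proof.
move=> E0 S0 N0 hp hs [k hk] hNv hmeas hunif hind.
have [c [hc1 hc2 hc3]] := H_exists R E S Nobj k E0 S0 N0 hk ws0 hp hs.
set pHv := pH R E S Nobj ws0 c.
set q := q0 R Nobj k ws0.
have hpH0 : 0 < pHv := pH_gt0 R E S Nobj ws0 E0 S0 N0 hp c hc2.
have hpH1 : pHv <= 1 := pH_le1 R d T P U E S Nobj k ws0 E0 S0 N0 hp hmeas hunif hind c hc2.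
have /andP[q0 q1] := q0_bounds R E S Nobj k ws0 E0 S0 N0 hp hk hNv.
have ha : 0 <= 1 - pHv < 1 by apply/andP; split; lra.
have qq0 : 0 < q * q by rewrite mulr_gt0.
have qq1 : q * q < 1 by rewrite -[1]mulr1 ltr_pM ?ltW.
have hb : 0 < 1 - q * q < 1 by apply/andP; split; lra.
set th := Num.max (1 - pHv) (1 - q * q).
set lam := - ln th / 2.
have th0 : 0 < th by rewrite lt_max; case/andP: hb => -> _; rewrite orbT.
have th1 : th < 1 by rewrite gt_max; case/andP: ha => _ ->; case/andP: hb => _ ->.
have lam0 : 0 < lam.
  have L : ln th < 0 by rewrite ln_lt0 // th0 th1.
  rewrite /lam; lra.
have hmN : forall l, measurable [set om | Ntot E S Nobj ws0 U l om <> Nobj].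
  by move=> l; apply: (Ntot_meas R d T U hmeas).
have hbd : forall l, (P [set om | Ntot E S Nobj ws0 U l om <> Nobj]
        <= (expR (- (l%:R * lam)))%:E)%E.
  case=> [|l].
    by rewrite mul0r oppr0 expR0; apply: probability_le1; apply: hmN.
  apply: (le_trans (bound R d T P U E S Nobj k ws0 E0 S0 N0 hp hs hk hNv hmeas hunif hind c hc1 hc2 hc3 l.+1 isT)).
  rewrite lee_fin; apply: real_bound => //.
  exact: half_bound.
split; last by exists lam.
set a := fun l => pr R d T P [set om | Ntot E S Nobj ws0 U l om <> Nobj].
have ea : forall l, P [set om | Ntot E S Nobj ws0 U l om = Nobj] = (1 - a l)%:E.
  move=> l.
  have -> : [set om | Ntot E S Nobj ws0 U l om = Nobj] =
      ~` [set om | Ntot E S Nobj ws0 U l om <> Nobj].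
    apply/seteqP; split => om /=; first by move=> h /(_ h).
    by move=> h; apply: contrapT.
  by rewrite probability_setC ?hmN // (prE R d T P _ (hmN l)) EFinB.
have a0 : forall l, 0 <= a l by move=> l; apply: pr_ge0.
have aub : forall l, a l <= expR (- lam) ^+ l.
  move=> l; rewrite -expRM_natl mulrN -lee_fin -(prE R d T P _ (hmN l)).
  exact: hbd.
have acvg : a @ \oo --> (0:R)%R.
  apply: (@squeeze_cvgr _ _ _ _ (fun => 0) (fun l => expR (- lam) ^+ l)).
  - by apply: nearW => l; rewrite a0 aub.
  - exact: cvg_cst.
  - apply: cvg_expr; rewrite ger0_norm ?expR_ge0 // -expR0 ltr_expR; lra.
have -> : (fun l => P [set om | Ntot E S Nobj ws0 U l om = Nobj]) = (fun l => (1 - a l)%:E).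
  by apply: funext => l; rewrite ea.
apply: cvg_EFin; first by apply: nearW.
have -> : (fine \o (fun l => (1 - a l)%:E)) = (fun l => 1 - a l) by [].
rewrite -[X in _ --> X]subr0.
by apply: cvgB => //; exact: cvg_cst.
Qed.
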